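(* Let $\Gamma$ be a finitely generated discrete group with finite symmetric generating set $Q$, let $Z\subseteq\mathrm{Sub}(\Gamma)$ be a uniformly recurrent subgroup, and let $H\in Z$. If $Z$ is generic, then the groupoid $\mathcal{G}_H$ is principal.
   Context: Word length $l(\gamma)$ is taken with respect to $Q$. $\mathrm{Sub}(\Gamma)$ is the space of subgroups of $\Gamma$ with the topology of pointwise convergence of indicator functions, with $\Gamma$ acting by conjugation $\gamma.H=\gamma H\gamma^{-1}$. A uniformly recurrent subgroup (URS) is a nonempty closed $\Gamma$-invariant subset $Z\subseteq\mathrm{Sub}(\Gamma)$ on which every $\Gamma$-orbit is dense. $Z$ is generic if for every $H'\in Z$ the stabiliser $\{\gamma\in\Gamma:\gamma H'\gamma^{-1}=H'\}$ equals $H'$. A groupoid is principal if every arrow whose range equals its source is a unit. For $H\le\Gamma$, the Schreier graph $S(H)$ is the rooted labeled graph with vertex set $\Gamma/H$, root $H$, and for each $\gamma H$ and $q\in Q$ an edge from $\gamma H$ to $q\gamma H$ labeled $q$; $B_n(S,p)$ is the ball of radius $n$ (path metric) around $p$; root-label isomorphism means graph isomorphism preserving roots and labels. The groupoid $\mathcal{G}_H$: write $S=S(H)$. For $p\in\Gamma/H$, $n\ge0$ let $[p]_n$ be the root-label isomorphism class of $(B_n(S,p),p)$; $E_n=\{[p]_n\}$ with maps $[p]_{n+1}\mapsto[p]_n$; $\mathcal{G}_H^0=\varprojlim E_n$. For $x=(x_n)\in\mathcal{G}_H^0$ choose $p_n$ with $x_n=[p_n]_n$. Arrows are classes of pairs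 $(x,\gamma)$, $x\in\mathcal{G}_H^0$, $\gamma\in\Gamma$, with $(x,\gamma)\sim(x,\gamma')$ iff $\gamma p_n=\gamma'p_n$ for all large $n$. Range $r(x,\gamma)=x$, source $\gamma.x$ with $(\gamma.x)_n=[\gamma p_{n+l(\gamma)}]_n$, product $(x,\gamma')(\gamma'.x,\gamma)=(x,\gamma\gamma')$, inverse $(\gamma.x,\gamma^{-1})$, units $(x,e)$. *)

(* Defs.v *)
From Stdlib Require Import List Arith ClassicalEpsilon.
Import ListNotations.

Set Implicit Arguments.

Record group := Group {
  carrier :> Type;
  mul : carrier -> carrier -> carrier;
  one : carrier;
  inv : carrier -> carrier;
  mulA : forall x y z, mul x (mul y z) = mul (mul x y) z;
  mul1g : forall x, mul one x = x;
  mulg1 : forall x, mul x one = x;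
  mulVg : forall x, mul (inv x) x = one;
  mulgV : forall x, mul x (inv x) = one
}.

Arguments mul {g}.
Arguments one {g}.
Arguments inv {g}.

Section Defs.
Context {G : group}.

Definition wprod (w : list G) : G := fold_right mul one w.

Definition word_in (Q : list G) (w : list G) : Prop := Forall (fun s => In s Q) w.

Definition symmetric_set (Q : list G) : Prop := forall q, In q Q -> In (inv q) Q.
Definition generates (Q : list G) : Prop :=
  forall g : G, exists w, word_in Q w /\ wprod w = g.

Definition is_word_length (Q : list G) (g : G) (k : nat) : Prop :=
  (exists w, word_in Q w /\ wprod w = g /\ length w = k) /\
  (forall w, word_in Q w -> wprod w = g -> k <= length w).
Definition word_length (Q : list G) (g : G) : nat :=
  epsilon (inhabits 0) (is_word_length Q g).

Definition is_subgroup (H : G -> Prop) : Prop :=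
  H one /\ (forall x y, H x -> H y -> H (mul x y)) /\ (forall x, H x -> H (inv x)).

(* conjugation action  g.H = g H g^-1 :  x in gHg^-1  <->  g^-1 x g in H *)
Definition conjsub (g : G) (H : G -> Prop) : G -> Prop :=
  fun x => H (mul (mul (inv g) x) g).

Definition sub_eq (H K : G -> Prop) : Prop := forall x, H x <-> K x.

(* H and K agree on the finite set F (basic neighbourhoods of the topology
   of pointwise convergence of indicator functions) *)
Definition agree_on (F : list G) (H K : G -> Prop) : Prop :=
  forall x, In x F -> (H x <-> K x).

Definition URS (Z : (G -> Prop) -> Prop) : Prop :=
  (forall K, Z K -> is_subgroup K) /\
  (exists K, Z K) /\
  (* closed in Sub(Gamma) for the topology of pointwise convergence *)
  (forall K, is_subgroup K ->
     (forall F : list G, exists K', Z K' /\ agree_on F K' K) -> Z K) /\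
  (forall g K, Z K -> Z (conjsub g K)) /\
  (* every orbit is dense in Z *)
  (forall H' K, Z H' -> Z K ->
     forall F : list G, exists g, agree_on F (conjsub g H') K).

(* Z is generic: the stabiliser of every H' in Z is H' itself *)
Definition generic_URS (Z : (G -> Prop) -> Prop) : Prop :=
  forall H', Z H' -> forall g : G, sub_eq (conjsub g H') H' <-> H' g.

(* vertices gH; aH = bH  <->  a^-1 b in H *)
Definition coset_eq (H : G -> Prop) (a b : G) : Prop := H (mul (inv a) b).

(* path metric: the vertex uH is at distance <= n from aH.  An (undirected)
   step along an edge labelled q goes from v to qv or from qv to v. *)
Definition step_elt (Q : list G) (s : G) : Prop := In s Q \/ In (inv s) Q.
Definition in_ball (Q : list G) (H : G -> Prop) (n : nat) (a u : G) : Prop :=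
  exists w, Forall (step_elt Q) w /\ length w <= n /\ coset_eq H (mul (wprod w) a) u.

(* (B_n(S,aH), aH) and (B_n(S,bH), bH) are root-label isomorphic
   (balls are induced labelled subgraphs; an edge from uH to q uH labelled q) *)
Definition ball_iso (Q : list G) (H : G -> Prop) (n : nat) (a b : G) : Prop :=
  exists phi : G -> G,
    coset_eq H (phi a) b /\
    (forall u, in_ball Q H n a u -> in_ball Q H n b (phi u)) /\
    (forall u u', in_ball Q H n a u -> in_ball Q H n a u' ->
       (coset_eq H u u' <-> coset_eq H (phi u) (phi u'))) /\
    (forall v, in_ball Q H n b v -> exists u, in_ball Q H n a u /\ coset_eq H (phi u) v) /\
    (forall u v q, in_ball Q H n a u -> in_ball Q H n a v -> In q Q ->
       (coset_eq H (mul q u) v <-> coset_eq H (mul q (phi u)) (phi v))).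

(* A point x = (x_n) of G_H^0 = lim E_n is given by a sequence of coset
   representatives p_n with x_n = [p_n H]_n; compatibility [p_{n+1}]_n = [p_n]_n. *)
Definition unit_point (Q : list G) (H : G -> Prop) (p : nat -> G) : Prop :=
  forall n, ball_iso Q H n (p (S n)) (p n).

Definition unit_eq (Q : list G) (H : G -> Prop) (p p' : nat -> G) : Prop :=
  forall n, ball_iso Q H n (p n) (p' n).

(* source of the arrow (x,gamma): (gamma.x)_n = [gamma p_{n + l(gamma)}]_n *)
Definition arrow_source (Q : list G) (gamma : G) (p : nat -> G) : nat -> G :=
  fun n => mul gamma (p (n + word_length Q gamma)).

Definition arrow_equiv (H : G -> Prop) (p : nat -> G) (gamma gamma' : G) : Prop :=
  exists N, forall n, N <= n -> coset_eq H (mul gamma (p n)) (mul gamma' (p n)).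

(* G_H is principal: every arrow (x,gamma) whose range x equals its source
   gamma.x is a unit, i.e. equivalent to (x,e). *)
Definition GH_principal (Q : list G) (H : G -> Prop) : Prop :=
  forall p : nat -> G, unit_point Q H p ->
  forall gamma : G, unit_eq Q H p (arrow_source Q gamma p) ->
  arrow_equiv H p gamma one.

End Defs.

(* Main.v *)
Require Import Defs.
From Stdlib Require Import List Arith Lia.
Import ListNotations.

Arguments mulA {g}. Arguments mul1g {g}. Arguments mulg1 {g}. Arguments mulVg {g}. Arguments mulgV {g}.

Section Aux.
Context {G : group}.

Lemma inv_uniq (x y : G) : mul x y = one -> y = inv x.
Proof.
  intro E. rewrite <- (mul1g y). rewrite <- (mulVg x). rewrite <- mulA, E, mulg1. reflexivity.
Qed.

Lemma inv_mul (x y : G) : inv (mul x y) = mul (inv y) (inv x).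
Proof.
  symmetry. apply inv_uniq. rewrite mulA. rewrite <- (mulA x y), mulgV, mulg1, mulgV. reflexivity.
Qed.

Lemma inv_inv (x : G) : inv (inv x) = x.
Proof. symmetry. apply inv_uniq. apply mulVg. Qed.

Variable H : G -> Prop.
Hypothesis Hs : is_subgroup H.

Lemma ce_refl a : coset_eq H a a.
Proof. unfold coset_eq. rewrite mulVg. apply Hs. Qed.

Lemma ce_sym a b : coset_eq H a b -> coset_eq H b a.
Proof.
  unfold coset_eq. intro h. destruct Hs as [_ [_ Hi]]. apply Hi in h.
  rewrite inv_mul, inv_inv in h. exact h.
Qed.

Lemma ce_trans a b c : coset_eq H a b -> coset_eq H b c -> coset_eq H a c.
Proof.
  unfold coset_eq. intros h1 h2. destruct Hs as [_ [Hm _]].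
  pose proof (Hm _ _ h1 h2) as h.
  rewrite <- mulA, (mulA b), mulgV, mul1g in h. exact h.
Qed.

Lemma ce_lmul q x y : coset_eq H (mul q x) (mul q y) <-> coset_eq H x y.
Proof.
  unfold coset_eq. rewrite inv_mul, <- mulA, (mulA (inv q)), mulVg, mul1g. tauto.
Qed.

Lemma ce_eq x y : x = y -> coset_eq H x y.
Proof. intros ->. apply ce_refl. Qed.

Definition C (a g : G) := coset_eq H a (mul g a).

Lemma core_path Q n a b phi (w : list G) :
  coset_eq H (phi a) b ->
  (forall u v q, in_ball Q H n a u -> in_ball Q H n a v -> In q Q ->
       (coset_eq H (mul q u) v <-> coset_eq H (mul q (phi u)) (phi v))) ->
  Forall (fun s => In s Q) w -> length w <= n ->
  coset_eq H (phi (mul (wprod w) a)) (mul (wprod w) b).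
Proof.
  intros Hr He. induction w as [|q w IH]; intros Hw Hl.
  - simpl. rewrite !mul1g. exact Hr.
  - inversion Hw; subst. simpl in Hl. simpl.
    assert (Hu : in_ball Q H n a (mul (wprod w) a)).
    { exists w. split; [|split; [lia|apply ce_refl]].
      eapply Forall_impl; [|exact H3]. intros s hs; left; exact hs. }
    assert (Hv : in_ball Q H n a (mul (mul q (wprod w)) a)).
    { exists (q :: w). split; [|split; [simpl; lia|apply ce_refl]].
      constructor; [left; exact H2|]. eapply Forall_impl; [|exact H3]. intros s hs; left; exact hs. }
    pose proof (proj1 (He _ _ _ Hu Hv H2) (ce_eq _ _ (mulA _ _ _))) as E.
    specialize (IH H3 ltac:(lia)).
    apply (proj2 (ce_lmul q _ _)) in IH.
    rewrite mulA in IH.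
    eapply ce_trans; [apply ce_sym; exact E| exact IH].
Qed.

Lemma core Q n a b w :
  ball_iso Q H n a b -> Forall (fun s => In s Q) w -> length w <= n ->
  (C a (wprod w) <-> C b (wprod w)).
Proof.
  intros [phi [Hr [_ [Hc [_ He]]]]] Hw Hl.
  pose proof (core_path Q n a b phi w Hr He Hw Hl) as P.
  assert (Ha : in_ball Q H n a a).
  { exists nil. split; [constructor|split; [simpl; lia|]]. simpl. rewrite mul1g. apply ce_refl. }
  assert (Hga : in_ball Q H n a (mul (wprod w) a)).
  { exists w. split; [|split; [lia|apply ce_refl]].
    eapply Forall_impl; [|exact Hw]. intros s hs; left; exact hs. }
  unfold C. rewrite (Hc _ _ Ha Hga). split; intro h.
  - eapply ce_trans; [apply ce_sym; exact Hr|]. eapply ce_trans; [exact h|exact P].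
  - eapply ce_trans; [exact Hr|]. eapply ce_trans; [exact h|apply ce_sym; exact P].
Qed.

Lemma C_conj g b x : C (mul g b) x <-> C b (mul (mul (inv g) x) g).
Proof.
  unfold C. rewrite <- (ce_lmul (inv g)).
  rewrite (mulA (inv g) g b), mulVg, mul1g.
  rewrite (mulA (inv g) x), (mulA (mul (inv g) x) g b). tauto.
Qed.

End Aux.

Theorem proposition5p1 (Gamma : group) (Q : list Gamma)
  (Z : (Gamma -> Prop) -> Prop) (H : Gamma -> Prop) :
  symmetric_set Q -> generates Q ->
  URS Z -> Z H ->
  generic_URS Z ->
  GH_principal Q H.
Proof.
  intros Hsym Hgen [Zsub [_ [Zcl [Zinv _]]]] ZH Hgeneric.
  intros p Hp gamma Hue.
  assert (Hs : is_subgroup H) by (apply Zsub; exact ZH).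
  assert (stab : forall g, exists m, forall n1 n2, m <= n1 -> m <= n2 ->
             (C H (p n1) g <-> C H (p n2) g)).
  { intro g. destruct (Hgen g) as [w [Hw Hwg]]. exists (length w).
    assert (S1 : forall k, C H (p (length w + k)) g <-> C H (p (length w)) g).
    { induction k as [|k IH].
      - rewrite Nat.add_0_r. tauto.
      - rewrite <- IH, <- Hwg. rewrite Nat.add_succ_r.
        apply (core H Hs Q (length w + k)); [apply Hp|exact Hw|lia]. }
    intros n1 n2 h1 h2.
    replace n1 with (length w + (n1 - length w)) by lia.
    replace n2 with (length w + (n2 - length w)) by lia.
    rewrite !S1. tauto. }
  set (K := fun g => exists N, forall n, N <= n -> C H (p n) g).
  assert (KE : forall g, exists m, forall n, m <= n -> (K g <-> C H (p n) g)).
  { intro g. destruct (stab g) as [m Hm]. exists m. intros n hn. split.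
    - intros [N HN]. apply (Hm (max N m) n); [lia|lia|]. apply HN. lia.
    - intro h. exists m. intros n' hn'. apply (Hm n n'); [lia|lia|exact h]. }
  assert (Ksub : is_subgroup K).
  { split; [|split].
    - exists 0. intros n _. unfold C. rewrite mul1g. apply (ce_refl H Hs).
    - intros x y [N1 H1] [N2 H2]. exists (max N1 N2). intros n hn.
      specialize (H1 n ltac:(lia)). specialize (H2 n ltac:(lia)). unfold C in *.
      apply (proj2 (ce_lmul H x _ _)) in H2.
      rewrite <- mulA. eapply (ce_trans H Hs); [exact H1|exact H2].
    - intros x [N1 H1]. exists N1. intros n hn. specialize (H1 n hn). unfold C in *.
      apply (proj2 (ce_lmul H (inv x) _ _)) in H1.
      rewrite mulA, mulVg, mul1g in H1. apply (ce_sym H Hs); exact H1. }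
  assert (KZ : Z K).
  { apply Zcl; [exact Ksub|]. intro F.
    assert (HN : exists N, forall x, In x F -> forall n, N <= n -> (K x <-> C H (p n) x)).
    { induction F as [|x F IH].
      - exists 0. intros x [].
      - destruct IH as [N1 HN1]. destruct (KE x) as [m Hm]. exists (max N1 m).
        intros y [<-|hy] n hn; [apply Hm; lia|apply HN1; [exact hy|lia]]. }
    destruct HN as [N HN]. exists (conjsub (p N) H). split; [apply Zinv; exact ZH|].
    intros x hx. rewrite (HN x hx N (le_n N)). unfold conjsub, C, coset_eq.
    rewrite mulA. tauto. }
  assert (Kconj : sub_eq (conjsub gamma K) K).
  { intro x. unfold conjsub. fold K.
    destruct (KE x) as [m1 Hm1]. destruct (KE (mul (mul (inv gamma) x) gamma)) as [m2 Hm2].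
    destruct (Hgen x) as [w [Hw Hwx]].
    set (n := max m1 (max m2 (length w))).
    set (l := word_length Q gamma).
    rewrite (Hm1 n ltac:(lia)), (Hm2 (n + l) ltac:(lia)).
    rewrite <- (C_conj H gamma (p (n + l)) x).
    unfold arrow_source in Hue. fold l in Hue.
    rewrite <- Hwx. symmetry. apply (core H Hs Q n); [apply (Hue n)|exact Hw|lia]. }
  apply (Hgeneric K KZ gamma) in Kconj.
  destruct Ksub as [_ [_ Ki]]. destruct (Ki _ Kconj) as [N HN].
  exists N. intros n hn. specialize (HN n hn). unfold C in HN.
  apply (proj2 (ce_lmul H gamma _ _)) in HN.
  rewrite mulA, mulgV, mul1g in HN. rewrite mul1g. exact HN.
Qed.
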